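(* Let $X,U$ be Banach spaces and $\mathcal{U}=PC(\mathbb{R}_+,U)$. Let $\{A(t)\}_{t\ge0}$ generate a strongly continuous evolution family $\{W(t,s)\}_{t\ge s\ge0}$. Let $B\in C(\mathbb{R}_+,L(U,X))$ with $\|B\|_\infty=\sup_t\|B(t)\|<\infty$. Let $\psi:\mathbb{R}_+\times X\times U\to X$, and consider $$\dot x=A(t)x+B(t)u+\psi(t,x,u),\quad x(t_0)=x_0. \tag{N}$$ Assume that $\Psi(t,x,u)=B(t)u+\psi(t,x,u)$ satisfies $(\mathcal{H}_1)$ and that $\psi$ satisfies $(\mathcal{H}_2)$. If the linear system $\dot x=A(t)x+B(t)u$ is 0-UGAS, then $$V(t,x)=\int_t^\infty\|W(\tau,t)x\|_X^2\,d\tau$$ is a non-coercive LISS Lyapunov function in implication form for (N).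
   Context: A strongly continuous evolution family generated by $\{A(t)\}$ satisfies: - $W(s,s)=I$ and $W(t,s)=W(t,r)W(r,s)$; - $(t,s)\mapsto W(t,s)x$ is continuous; - for $v\in D(A(s))$: $\partial_tW(t,s)v=A(t)W(t,s)v$ and $\partial_sW(t,s)v=-W(t,s)A(s)v$. $PC(\mathbb{R}_+,U)$ consists of bounded, right-continuous, piecewise continuous functions, with the sup norm $\|\cdot\|_{\mathcal{U}}$. $(\mathcal{H}_1)$: $\Psi$ is jointly continuous in $(t,u)$ and, for each $c,\tilde t\ge0$, Lipschitz in $x$ uniformly over $t\in[0,\tilde t]$ and $\|x\|,\|u\|\le c$. Under $(\mathcal{H}_1)$, (N) has unique maximal mild solutions $\phi(t,t_0,x_0,u)=W(t,t_0)x_0+\int_{t_0}^tW(t,s)\Psi(s,\phi(s),u(s))ds$. $(\mathcal{H}_2)$: for each $a>0$ there exist $b>0$ and $\rho>0$ such that $\|\psi(t,x,v)\|_X\le a\|x\|_X+b\|v\|_U$ for all $t\ge0$, $x\in X$ and $v\in U$ with $\|x\|_X,\|v\|_U\le\rho$. 0-UGAS of the linear system: there is $\beta\in\mathcal{KL}$ with $\|W(t,t_0)x_0\|\le\beta(\|x_0\|,t-t_0)$. Lie derivative: $\dot V_u(t,x)=\limsup_{h\to0^+}\frac1h(V(t+h,\phi(t+h,t,x,u))-V(t,x))$. Non-coercive LISS Lyapunov function in implication form. A continuous $V:\mathbb{R}_+\times D\to\mathbb{R}_+$ ($D\ni0$ open) with $V(t,0)=0$, for which there exist $\alpha_2\in\mathcal{K}_\infty$,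 $\kappa\in\mathcal{K}$, positive definite $\mu$ and $r_1,r_2>0$ with $\{\|x\|\le r_1\}\subset D$, such that: - $0<V(t,x)\le\alpha_2(\|x\|_X)$ for $x\in D\setminus\{0\}$ and $t\ge0$; - for all $t\ge0$, $\|x\|_X\le r_1$ and $u\in\mathcal{U}$ with $\|u\|_{\mathcal{U}}\le r_2$: $\|x\|_X\ge\kappa(\|u\|_{\mathcal{U}})$ implies $\dot V_u(t,x)\le-\mu(V(t,x))$. *)

(* Defs.v *)
From Stdlib Require Import Reals.
From Coquelicot Require Import Coquelicot.
Open Scope R_scope.

Section Defs.

Definition class_K (g : R -> R) : Prop :=
  g 0 = 0 /\
  (forall r, 0 <= r -> continuity_pt g r) /\
  (forall r s, 0 <= r -> r < s -> g r < g s).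

Definition class_Kinf (g : R -> R) : Prop :=
  class_K g /\ (forall M, exists r, 0 <= r /\ M < g r).

Definition class_KL (b : R -> R -> R) : Prop :=
  (forall t, 0 <= t -> class_K (fun r => b r t)) /\
  (forall r, 0 <= r ->
     (forall t s, 0 <= t -> t <= s -> b r s <= b r t) /\
     is_lim (fun t => b r t) p_infty 0).

Definition pos_def (m : R -> R) : Prop :=
  m 0 = 0 /\ (forall r, 0 <= r -> continuity_pt m r) /\
  (forall r, 0 < r -> 0 < m r).

Context {X U : CompleteNormedModule R_AbsRing}.

Definition PC_input (u : R -> U) : Prop :=
  (exists M, forall t, 0 <= t -> norm (u t) <= M) /\
  (forall t, 0 <= t -> filterlim u (at_right t) (locally (u t))) /\
  (* piecewise continuous: finitely many discontinuities on each bounded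
     interval, and left limits exist *)
  (forall T, exists l : list R,
     forall t, 0 <= t <= T -> ~ List.In t l -> continuous u t) /\
  (forall t, 0 < t -> exists y, filterlim u (at_left t) (locally y)).

Definition input_norm (u : R -> U) : R :=
  real (Lub_Rbar (fun r => exists t, 0 <= t /\ r = norm (u t))).

Definition evolution_family (DA : R -> X -> Prop) (A : R -> X -> X)
  (W : R -> R -> X -> X) : Prop :=
  (forall t, DA t zero /\
     (forall x y, DA t x -> DA t y -> DA t (plus x y) /\
                  A t (plus x y) = plus (A t x) (A t y)) /\
     (forall (k : R) x, DA t x -> DA t (scal k x) /\ A t (scal k x) = scal k (A t x))) /\
  (forall t s, 0 <= s <= t -> is_linear (W t s)) /\
  (forall s x, 0 <= s -> W s s x = x) /\
  (forall t r s x, 0 <= s -> s <= r -> r <= t -> W t s x = W t r (W r s x)) /\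
  (forall x t s, 0 <= s <= t ->
     filterlim (fun p : R * R => W (fst p) (snd p) x)
       (within (fun p : R * R => 0 <= snd p <= fst p) (locally (t, s)))
       (locally (W t s x))) /\
  (forall t s v, 0 <= s <= t -> DA s v ->
     DA t (W t s v) /\
     filterlim (fun h => scal (/ h) (minus (W (t + h) s v) (W t s v)))
       (within (fun h => h <> 0 /\ s <= t + h) (locally 0))
       (locally (A t (W t s v)))) /\
  (forall t s v, 0 <= s <= t -> DA s v ->
     filterlim (fun h => scal (/ h) (minus (W t (s + h) v) (W t s v)))
       (within (fun h => h <> 0 /\ 0 <= s + h <= t) (locally 0))
       (locally (opp (W t s (A s v))))).

Definition B_cont_bounded (B : R -> U -> X) : Prop :=
  (forall t, 0 <= t -> is_linear (B t)) /\
  (forall t, 0 <= t -> forall eps, 0 < eps -> exists delta, 0 < delta /\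
     forall s, 0 <= s -> Rabs (s - t) < delta ->
       forall v, norm (minus (B s v) (B t v)) <= eps * norm v) /\
  (exists M, forall t, 0 <= t -> forall v, norm (B t v) <= M * norm v).

Definition H1 (Psi : R -> X -> U -> X) : Prop :=
  (forall x t v, 0 <= t ->
     filterlim (fun p : R * U => Psi (fst p) x (snd p))
       (within (fun p : R * U => 0 <= fst p) (locally (t, v)))
       (locally (Psi t x v))) /\
  (forall c tt, 0 <= c -> 0 <= tt -> exists L, 0 <= L /\
     forall t x y v, 0 <= t <= tt -> norm x <= c -> norm y <= c -> norm v <= c ->
       norm (minus (Psi t x v) (Psi t y v)) <= L * norm (minus x y)).

Definition H2 (psi : R -> X -> U -> X) : Prop :=
  forall a, 0 < a -> exists b rho, 0 < b /\ 0 < rho /\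
    forall t x v, 0 <= t -> norm x <= rho -> norm v <= rho ->
      norm (psi t x v) <= a * norm x + b * norm v.

Definition zero_UGAS (W : R -> R -> X -> X) : Prop :=
  exists beta, class_KL beta /\
    forall t t0 x0, 0 <= t0 -> t0 <= t -> norm (W t t0 x0) <= beta (norm x0) (t - t0).

Definition mild_solution (W : R -> R -> X -> X) (Psi : R -> X -> U -> X)
  (t0 : R) (x0 : X) (u : R -> U) (T : R) (phi : R -> X) : Prop :=
  (forall tau, t0 <= tau < T ->
     filterlim phi (within (fun s => t0 <= s < T) (locally tau)) (locally (phi tau))) /\
  (forall tau, t0 <= tau < T ->
     is_RInt (fun s => W tau s (Psi s (phi s) (u s))) t0 tau
       (minus (phi tau) (W tau t0 x0))).

(* Lie derivative limsup_{h->0+} (V(t+h,phi(t+h)) - V(t,x))/h along a solution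
   phi defined on [t,T), as an extended real *)
Definition lie_derivative (V : R -> X -> R) (t : R) (x : X) (T : R)
  (phi : R -> X) : Rbar :=
  Glb_Rbar (fun y => exists delta, 0 < delta <= T - t /\
    y = Lub_Rbar (fun q => exists h, 0 < h < delta /\
          q = (V (t + h) (phi (t + h)) - V t x) / h)).

Definition nc_LISS_Lyapunov_impl (W : R -> R -> X -> X) (Psi : R -> X -> U -> X)
  (D : X -> Prop) (V : R -> X -> R) : Prop :=
  D zero /\
  (forall x, D x -> exists e, 0 < e /\ forall y, ball x e y -> D y) /\
  (forall t x, 0 <= t -> D x ->
     filterlim (fun p : R * X => V (fst p) (snd p))
       (within (fun p : R * X => 0 <= fst p /\ D (snd p)) (locally (t, x)))
       (locally (V t x))) /\
  (forall t x, 0 <= t -> D x -> 0 <= V t x) /\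
  (forall t, 0 <= t -> V t zero = 0) /\
  exists (alpha2 kappa mu : R -> R) (r1 r2 : R),
    class_Kinf alpha2 /\ class_K kappa /\ pos_def mu /\ 0 < r1 /\ 0 < r2 /\
    (forall x, norm x <= r1 -> D x) /\
    (forall t x, 0 <= t -> D x -> x <> zero ->
       0 < V t x /\ V t x <= alpha2 (norm x)) /\
    (forall t x u, 0 <= t -> norm x <= r1 -> PC_input u -> input_norm u <= r2 ->
       norm x >= kappa (input_norm u) ->
       forall T phi, t < T -> mild_solution W Psi t x u T phi ->
         Rbar_le (lie_derivative V t x T phi) (Finite (- mu (V t x)))).

End Defs.

Definition V_W {X : CompleteNormedModule R_AbsRing} (W : R -> R -> X -> X)
  (t : R) (x : X) : R :=
  RInt_gen (fun tau => (norm (W tau t x)) ^ 2) (at_point t) (Rbar_locally p_infty).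

(* Main.v *)
Require Import Defs.
From Stdlib Require Import Reals Lra Lia ZArith Classical_Prop.
From Coquelicot Require Import Coquelicot.
Open Scope R_scope.

Lemma exp_le' : forall x y, x <= y -> exp x <= exp y.
Proof. intros x y H. destruct H as [H|H]. left; apply exp_increasing; auto. subst; lra. Qed.

Lemma ln2_pos : 0 < ln 2.
Proof. apply exp_lt_inv. rewrite exp_ln by lra. rewrite exp_0. lra. Qed.

Lemma nat_unbounded : forall r : R, exists n : nat, r < INR n.
Proof.
  intros r. destruct (archimed r) as [H1 _].
  destruct (Z_le_gt_dec 0 (up r)) as [Hz|Hz].
  - exists (Z.to_nat (up r)). rewrite INR_IZR_INZ. rewrite Z2Nat.id by lia. lra.
  - exists 0%nat. simpl. apply Z.gt_lt in Hz. apply IZR_lt in Hz. lra.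
Qed.

Lemma ball_R : forall (t p e : R), Rabs (p - t) < e -> @ball R_UniformSpace t e p.
Proof. intros. exact H. Qed.

Lemma ball_R' : forall (t p e : R), @ball R_UniformSpace t e p -> Rabs (p - t) < e.
Proof. intros. exact H. Qed.

Definition Good {X : CompleteNormedModule R_AbsRing} (W : R -> R -> X -> X) (M w : R) : Prop :=
  0 < M /\ 0 < w /\
  (forall t s, 0 <= s <= t -> is_linear (W t s)) /\
  (forall s x, 0 <= s -> W s s x = x) /\
  (forall t r s x, 0 <= s -> s <= r -> r <= t -> W t s x = W t r (W r s x)) /\
  (forall x t s, 0 <= s <= t ->
     filterlim (fun p : R * R => W (fst p) (snd p) x)
       (within (fun p : R * R => 0 <= snd p <= fst p) (locally (t, s)))
       (locally (W t s x))) /\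
  (forall t s x, 0 <= s <= t -> norm (W t s x) <= M * exp (-(w*(t-s))) * norm x).

Lemma norm_scal_R {X : CompleteNormedModule R_AbsRing} (k : R) (x : X) :
  norm (scal k x) <= Rabs k * norm x.
Proof. exact (@norm_scal R_AbsRing X k x). Qed.

Lemma exp_bound_exists {X : CompleteNormedModule R_AbsRing} (W : R -> R -> X -> X) :
  (forall t s, 0 <= s <= t -> is_linear (W t s)) ->
  (forall t r s x, 0 <= s -> s <= r -> r <= t -> W t s x = W t r (W r s x)) ->
  zero_UGAS W ->
  exists M w, 0 < M /\ 0 < w /\
   (forall t s x, 0 <= s <= t -> norm (W t s x) <= M * exp (-(w*(t-s))) * norm x).
Proof.
  intros Hlin Hcomp [beta [[HK HL] Hb]].
  set (g := fun r => beta 1 r).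
  assert (Hmono : forall r1 r2 tt, 0 <= tt -> 0 <= r1 -> r1 <= r2 -> beta r1 tt <= beta r2 tt).
  { intros r1 r2 tt Htt H1 H2. destruct (HK tt Htt) as [_ [_ Hs]].
    destruct H2 as [H2|H2]. left; apply Hs; auto. subst; lra. }
  assert (B1 : forall t s x, 0 <= s <= t -> norm (W t s x) <= g (t-s) * norm x).
  { intros t s x Hst.
    destruct (Req_dec (norm x) 0) as [Hn|Hn].
    - apply norm_eq_zero in Hn. subst x. rewrite (linear_zero _ (Hlin t s Hst)).
      rewrite norm_zero, Rmult_0_r. lra.
    - assert (Hnp : 0 < norm x) by (pose proof (norm_ge_0 x); lra).
      assert (Ex : x = scal (norm x) (scal (/ norm x) x)).
      { rewrite scal_assoc. change (mult (norm x) (/ norm x)) with (norm x * / norm x).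
        rewrite Rinv_r by lra. symmetry; exact (scal_one x). }
      rewrite Ex at 1. rewrite (linear_scal _ (Hlin t s Hst)).
      eapply Rle_trans. apply norm_scal_R. rewrite Rabs_pos_eq by lra.
      rewrite Rmult_comm. apply Rmult_le_compat_r. lra.
      eapply Rle_trans. apply Hb; lra.
      unfold g. apply Hmono. lra. apply norm_ge_0.
      eapply Rle_trans. apply norm_scal_R. rewrite Rabs_pos_eq.
      rewrite Rinv_l by lra. lra. left; apply Rinv_0_lt_compat; lra. }
  assert (Gdec : forall r1 r2, 0 <= r1 -> r1 <= r2 -> g r2 <= g r1).
  { intros. unfold g. destruct (HL 1 ltac:(lra)) as [HH _]. apply HH; lra. }
  assert (G0 : 0 < g 0).
  { unfold g. destruct (HK 0 ltac:(lra)) as [H0 [_ Hs]]. apply Rle_lt_trans with (beta 0 0). lra. apply Hs; lra. }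
  destruct (HL 1 ltac:(lra)) as [_ Hlim].
  assert (HT : exists T, 0 < T /\ g T <= /2).
  { specialize (Hlim (fun y => Rabs (y - 0) < /2)).
    destruct Hlim as [T0 HT0].
    { exists (mkposreal (/2) ltac:(lra)). intros y Hy. exact Hy. }
    exists (Rmax T0 0 + 1). split. pose proof (Rmax_r T0 0); lra.
    assert (H := HT0 (Rmax T0 0 + 1) ltac:(pose proof (Rmax_l T0 0); lra)).
    unfold g. apply Rabs_def2 in H. lra. }
  destruct HT as [T [HT0 HT]].
  set (w := ln 2 / T). set (M := 2 * g 0).
  assert (Hw : 0 < w) by (unfold w; apply Rdiv_lt_0_compat; [apply ln2_pos|lra]).
  assert (HwT : exp (-(w*T)) = /2).
  { unfold w. replace (ln 2 / T * T) with (ln 2) by (field; lra).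
    rewrite exp_Ropp, exp_ln; lra. }
  assert (Ind : forall n : nat, forall tau, 0 <= tau < INR n * T -> forall s x, 0 <= s ->
            norm (W (s + tau) s x) <= M * exp (-(w*tau)) * norm x).
  { induction n as [|n IH].
    - intros tau Ht. simpl in Ht. lra.
    - intros tau Ht s x Hs.
      destruct (Rlt_le_dec tau T) as [Hlt|Hge].
      + eapply Rle_trans. apply B1; lra.
        replace (s + tau - s) with tau by ring.
        apply Rmult_le_compat_r. apply norm_ge_0.
        assert (exp (-(w*T)) <= exp (-(w*tau))).
        { apply exp_le'. apply Ropp_le_contravar. apply Rmult_le_compat_l; lra. }
        assert (g tau <= g 0) by (apply Gdec; lra).
        unfold M. rewrite HwT in H. nra.
      + rewrite (Hcomp (s+tau) (s+T) s x) by lra.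
        replace (s + tau) with ((s + T) + (tau - T)) by ring.
        eapply Rle_trans. apply IH.
        { rewrite S_INR in Ht. lra. } lra.
        eapply Rle_trans. apply Rmult_le_compat_l.
        { apply Rmult_le_pos. unfold M; lra. left; apply exp_pos. }
        apply B1. lra.
        replace (s + T - s) with T by ring.
        replace (-(w*tau)) with (-(w*(tau-T)) + -(w*T)) by ring.
        rewrite exp_plus, HwT.
        assert (0 <= g T) by (unfold g; assert (0 <= beta 1 T) by
          (destruct (HK T ltac:(lra)) as [H0 [_ Hs']];
           rewrite <- H0 ; left; apply Hs'; lra); lra).
        pose proof (exp_pos (-(w*(tau-T)))). pose proof (norm_ge_0 x).
        assert (M * exp (- (w * (tau - T))) * (g T * norm x) <=
                M * exp (- (w * (tau - T))) * (/2 * norm x)).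
        { apply Rmult_le_compat_l. unfold M; nra. apply Rmult_le_compat_r; lra. }
        lra. }
  exists M, w. split. unfold M; lra. split. exact Hw.
  intros t s x Hst.
  destruct (nat_unbounded ((t - s)/T)) as [n Hn].
  replace t with (s + (t - s)) at 1 by ring.
  apply Ind with n; [|lra].
  split. lra. apply Rmult_lt_reg_r with (/T). apply Rinv_0_lt_compat; lra.
  rewrite Rmult_assoc, Rinv_r by lra. lra.
Qed.
Lemma exp_int (k C t b : R) : 0 < k -> 0 <= C -> t <= b ->
  ex_RInt (fun tau => C * exp (-(k*(tau-t)))) t b /\
  RInt (fun tau => C * exp (-(k*(tau-t)))) t b <= C / k.
Proof.
  intros Hk HC Htb.
  assert (H : is_RInt (fun tau => C * exp (-(k*(tau-t)))) t b
     (minus ((fun tau => -(C/k) * exp (-(k*(tau-t)))) b) ((fun tau => -(C/k) * exp (-(k*(tau-t)))) t))).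
  { apply (is_RInt_derive (fun tau => -(C/k) * exp (-(k*(tau-t))))).
    - intros y _. auto_derive. auto. unfold Rminus. set (E := exp _). simpl in *. field. lra.
    - intros y _. apply continuity_pt_filterlim. apply derivable_continuous_pt. reg. }
  split. eexists; exact H.
  rewrite (is_RInt_unique _ _ _ _ H). simpl. unfold minus, plus, opp; simpl.
  replace (-(k*(t-t))) with 0 by ring. rewrite exp_0.
  pose proof (exp_pos (-(k*(b-t)))).
  assert (0 <= C / k) by (apply Rdiv_le_0_compat; lra).
  assert (0 <= C / k * exp (- (k * (b - t)))) by (apply Rmult_le_pos; lra).
  lra.
Qed.

Lemma W_diag_cont {X : CompleteNormedModule R_AbsRing} (W : R -> R -> X -> X) M w :
  Good W M w -> forall t x, 0 <= t -> forall eta, 0 < eta -> exists delta, 0 < delta /\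
   forall p q, 0 <= q <= p -> Rabs (p - t) < delta -> Rabs (q - t) < delta ->
     norm (minus (W p q x) x) < eta.
Proof.
  intros [_ [_ [_ [Hid [_ [Hcont _]]]]]] t x Ht eta Heta.
  specialize (Hcont x t t ltac:(lra)). rewrite (Hid t x Ht) in Hcont.
  assert (Hnf := @norm_factor_gt_0 R_AbsRing X).
  pose (eps := mkposreal (eta / norm_factor) (Rdiv_lt_0_compat _ _ Heta Hnf)).
  destruct (proj1 (filterlim_locally _ _) Hcont eps) as [d Hd].
  exists d. split. apply cond_pos. intros p q Hpq Hp Hq.
  assert (Hb := Hd (p, q) (conj (ball_R _ _ _ Hp) (ball_R _ _ _ Hq)) Hpq).
  apply (@norm_compat2 R_AbsRing X) in Hb. simpl in Hb.
  replace (norm_factor * (eta / norm_factor)) with eta in Hb by (field; lra). exact Hb.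
Qed.

Lemma Rmax_lip : forall a b c, Rabs (Rmax a c - Rmax b c) <= Rabs (a - b).
Proof.
  intros a b c. unfold Rmax. destruct (Rle_dec a c); destruct (Rle_dec b c);
  unfold Rabs; repeat destruct Rcase_abs; lra.
Qed.

Lemma W_tau_cont {X : CompleteNormedModule R_AbsRing} (W : R -> R -> X -> X) M w :
  Good W M w -> forall t x, 0 <= t -> forall tau0,
   continuous (fun tau => W (Rmax tau t) t x) tau0.
Proof.
  intros [_ [_ [_ [Hid [_ [Hcont _]]]]]] t x Ht tau0.
  specialize (Hcont x (Rmax tau0 t) t ltac:(split; [lra|apply Rmax_r])).
  apply filterlim_locally. intros eps.
  destruct (proj1 (filterlim_locally _ _) Hcont eps) as [d Hd].
  exists d. intros tau Htau.
  apply (Hd (Rmax tau t, t)).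
  - split. apply ball_R. eapply Rle_lt_trans. apply Rmax_lip. apply ball_R'. exact Htau.
    apply ball_center.
  - simpl. split. lra. apply Rmax_r.
Qed.

Definition fint {X : CompleteNormedModule R_AbsRing} (W : R -> R -> X -> X) (t : R) (x : X) :=
  fun tau => norm (W tau t x) ^ 2.

Lemma norm_sq_cont {X : CompleteNormedModule R_AbsRing} (y : X) :
  continuous (fun z : X => norm z ^ 2) y.
Proof.
  apply (continuous_ext (fun z : X => mult (norm z) (norm z))).
  intros z. unfold mult; simpl. ring.
  apply (continuous_mult (K := R_AbsRing)); apply (@filterlim_norm R_AbsRing X).
Qed.

Lemma fint_ex {X : CompleteNormedModule R_AbsRing} (W : R -> R -> X -> X) M w :
  Good W M w -> forall t x a b, 0 <= t -> t <= a -> a <= b -> ex_RInt (fint W t x) a b.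
Proof.
  intros HG t x a b Ht Ha Hab.
  apply ex_RInt_ext with (fun tau => norm (W (Rmax tau t) t x) ^ 2).
  { intros tau Htau. rewrite Rmin_left, Rmax_right in Htau by lra.
    unfold fint. rewrite Rmax_left by lra. reflexivity. }
  apply (ex_RInt_continuous (V := R_CompleteNormedModule)). intros z _.
  apply (continuous_comp (fun tau => W (Rmax tau t) t x) (fun z : X => norm z ^ 2)).
  apply (W_tau_cont W M w HG t x Ht). apply norm_sq_cont.
Qed.

Definition conv (F : R -> R) (l : R) :=
  forall eps, 0 < eps -> exists B, forall b, B <= b -> Rabs (F b - l) < eps.

Lemma conv_le_const F l C B0 : conv F l -> (forall b, B0 <= b -> F b <= C) -> l <= C.
Proof.
  intros H HB. destruct (Rle_dec l C) as [|Hn]; auto. exfalso.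
  destruct (H (l - C)) as [B HB1]. lra.
  specialize (HB1 (Rmax B B0) (Rmax_l _ _)). specialize (HB (Rmax B B0) (Rmax_r _ _)).
  apply Rabs_def2 in HB1. lra.
Qed.

Lemma conv_ge_const F l C B0 : conv F l -> (forall b, B0 <= b -> C <= F b) -> C <= l.
Proof.
  intros H HB. destruct (Rle_dec C l) as [|Hn]; auto. exfalso.
  destruct (H (C - l)) as [B HB1]. lra.
  specialize (HB1 (Rmax B B0) (Rmax_l _ _)). specialize (HB (Rmax B B0) (Rmax_r _ _)).
  apply Rabs_def2 in HB1. lra.
Qed.

Lemma conv_unique F l1 l2 : conv F l1 -> conv F l2 -> l1 = l2.
Proof.
  intros H1 H2. destruct (Req_dec l1 l2) as [|Hn]; auto. exfalso.
  assert (Hp : 0 < Rabs (l1 - l2) / 2).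
  { apply Rdiv_lt_0_compat. apply Rabs_pos_lt. lra. lra. }
  destruct (H1 _ Hp) as [B1 HB1]. destruct (H2 _ Hp) as [B2 HB2].
  specialize (HB1 (Rmax B1 B2) (Rmax_l _ _)). specialize (HB2 (Rmax B1 B2) (Rmax_r _ _)).
  pose proof (Rabs_triang (F (Rmax B1 B2) - l2) (l1 - F (Rmax B1 B2))).
  replace (F (Rmax B1 B2) - l2 + (l1 - F (Rmax B1 B2))) with (l1 - l2) in H by ring.
  rewrite <- Rabs_Ropp in HB1. replace (- (F (Rmax B1 B2) - l1)) with (l1 - F (Rmax B1 B2)) in HB1 by ring.
  lra.
Qed.

Lemma conv_shift F G c l B0 : (forall b, B0 <= b -> F b = c + G b) -> conv G l -> conv F (c + l).
Proof.
  intros HE H eps Heps. destruct (H eps Heps) as [B HB]. exists (Rmax B B0).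
  intros b Hb. rewrite HE by (pose proof (Rmax_r B B0); lra).
  replace (c + G b - (c + l)) with (G b - l) by ring. apply HB. pose proof (Rmax_l B B0); lra.
Qed.

Lemma conv_minus F G l1 l2 : conv F l1 -> conv G l2 -> conv (fun b => F b - G b) (l1 - l2).
Proof.
  intros H1 H2 eps Heps.
  destruct (H1 (eps/2)) as [B1 HB1]. lra. destruct (H2 (eps/2)) as [B2 HB2]. lra.
  exists (Rmax B1 B2). intros b Hb.
  specialize (HB1 b ltac:(pose proof (Rmax_l B1 B2); lra)).
  specialize (HB2 b ltac:(pose proof (Rmax_r B1 B2); lra)).
  replace (F b - G b - (l1 - l2)) with ((F b - l1) + - (G b - l2)) by ring.
  eapply Rle_lt_trans. apply Rabs_triang. rewrite Rabs_Ropp. lra.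
Qed.

Lemma conv_mono F B0 K : (forall b b', B0 <= b -> b <= b' -> F b <= F b') ->
  (forall b, B0 <= b -> F b <= K) -> exists l, conv F l.
Proof.
  intros Hm Hb.
  destruct (completeness (fun r => exists b, B0 <= b /\ r = F b)) as [l [Hub Hlub]].
  { exists K. intros r [b [Hb0 ->]]. apply Hb; auto. }
  { exists (F B0). exists B0. split; [lra|auto]. }
  exists l. intros eps Heps.
  assert (Hex : exists b, B0 <= b /\ l - eps < F b).
  { destruct (Classical_Prop.classic (exists b, B0 <= b /\ l - eps < F b)) as [|Hn]; auto.
    exfalso. assert (Hu : is_upper_bound (fun r => exists b, B0 <= b /\ r = F b) (l - eps)).
    { intros r [b [Hb0 ->]]. destruct (Rle_dec (F b) (l - eps)); auto. exfalso; apply Hn.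
      exists b. split; auto. lra. }
    specialize (Hlub _ Hu). lra. }
  destruct Hex as [b0 [Hb0 Hlt]]. exists b0. intros b Hbb.
  assert (F b0 <= F b) by (apply Hm; lra).
  assert (F b <= l) by (apply Hub; exists b; split; [lra|auto]).
  apply Rabs_def1; lra.
Qed.

Lemma conv_gen (f : R -> R) a l : conv (fun b => RInt f a b) l ->
  (forall b, a <= b -> ex_RInt f a b) ->
  is_RInt_gen f (at_point a) (Rbar_locally p_infty) l.
Proof.
  intros Hc Hex P [eps Heps].
  destruct (Hc eps (cond_pos eps)) as [B HB].
  apply Filter_prod with (fun x => x = a) (fun b => Rmax a B < b).
  - reflexivity.
  - exists (Rmax a B). auto.
  - intros x y -> Hy. simpl. exists (RInt f a y). split.
    apply (RInt_correct (V := R_CompleteNormedModule)). apply Hex. pose proof (Rmax_l a B); lra.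
    apply Heps. apply ball_R. apply HB. pose proof (Rmax_r a B); lra.
Qed.

Lemma RInt_Chasles_R (f : R -> R) a b c : ex_RInt f a b -> ex_RInt f b c ->
  RInt f a b + RInt f b c = RInt f a c.
Proof. intros. exact (RInt_Chasles (V := R_CompleteNormedModule) f a b c H H0). Qed.

Lemma RInt_plus_R (f g : R -> R) a b : ex_RInt f a b -> ex_RInt g a b ->
  RInt (fun x => f x + g x) a b = RInt f a b + RInt g a b.
Proof. intros. exact (RInt_plus (V := R_CompleteNormedModule) f g a b H H0). Qed.

Lemma ex_RInt_plus_R (f g : R -> R) a b : ex_RInt f a b -> ex_RInt g a b ->
  ex_RInt (fun x => f x + g x) a b.
Proof. intros. exact (ex_RInt_plus (V := R_NormedModule) f g a b H H0). Qed.

Lemma RInt_const_R (c a b : R) : RInt (fun _ => c) a b = (b - a) * c.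
Proof. exact (RInt_const (V := R_CompleteNormedModule) a b c). Qed.

Lemma ex_RInt_const_R (c a b : R) : ex_RInt (fun _ => c) a b.
Proof. exact (ex_RInt_const (V := R_NormedModule) a b c). Qed.

Lemma fint_bound {X : CompleteNormedModule R_AbsRing} (W : R -> R -> X -> X) M w :
  Good W M w -> forall t x tau, 0 <= t <= tau ->
  fint W t x tau <= M^2 * norm x ^ 2 * exp (-((2*w)*(tau - t))).
Proof.
  intros HG t x tau Ht. destruct HG as [HM [Hw [_ [_ [_ [_ Hb]]]]]].
  specialize (Hb tau t x Ht). unfold fint.
  pose proof (norm_ge_0 (W tau t x)).
  replace (-((2*w)*(tau-t))) with (-(w*(tau-t)) + -(w*(tau-t))) by ring.
  rewrite exp_plus.
  replace (M ^ 2 * norm x ^ 2 * (exp (- (w * (tau - t))) * exp (- (w * (tau - t)))))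
    with ((M * exp (- (w * (tau - t))) * norm x) ^ 2) by ring.
  apply pow_incr. lra.
Qed.

Lemma fint_nonneg {X : CompleteNormedModule R_AbsRing} (W : R -> R -> X -> X) t x tau :
  0 <= fint W t x tau.
Proof. unfold fint. apply pow2_ge_0. Qed.

Lemma fint_int_le {X : CompleteNormedModule R_AbsRing} (W : R -> R -> X -> X) M w :
  Good W M w -> forall t x b, 0 <= t <= b ->
  RInt (fint W t x) t b <= M^2 / (2*w) * norm x ^ 2.
Proof.
  intros HG t x b Ht. pose proof HG as [HM [Hw _]].
  assert (HC : 0 <= M^2 * norm x ^ 2) by (apply Rmult_le_pos; apply pow2_ge_0).
  destruct (exp_int (2*w) (M^2 * norm x ^ 2) t b ltac:(lra) HC ltac:(lra)) as [Hex Hle].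
  eapply Rle_trans. apply RInt_le. lra. apply (fint_ex W M w HG); lra. exact Hex.
  intros tau Htau. apply (fint_bound W M w HG). lra.
  replace (M ^ 2 / (2 * w) * norm x ^ 2) with (M ^ 2 * norm x ^ 2 / (2 * w)) by (field; lra).
  exact Hle.
Qed.

Lemma fint_mono {X : CompleteNormedModule R_AbsRing} (W : R -> R -> X -> X) M w :
  Good W M w -> forall t x b b', 0 <= t -> t <= b -> b <= b' ->
  RInt (fint W t x) t b <= RInt (fint W t x) t b'.
Proof.
  intros HG t x b b' Ht Hb Hb'.
  rewrite <- (RInt_Chasles_R _ t b b').
  assert (0 <= RInt (fint W t x) b b').
  { apply RInt_ge_0. lra. apply (fint_ex W M w HG); lra. intros; apply fint_nonneg. }
  lra. apply (fint_ex W M w HG); lra. apply (fint_ex W M w HG); lra.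
Qed.

Lemma V_conv {X : CompleteNormedModule R_AbsRing} (W : R -> R -> X -> X) M w :
  Good W M w -> forall t x, 0 <= t ->
  conv (fun b => RInt (fint W t x) t b) (V_W W t x).
Proof.
  intros HG t x Ht.
  destruct (conv_mono (fun b => RInt (fint W t x) t b) t (M^2/(2*w) * norm x ^ 2)) as [l Hl].
  { intros b b' Hb Hb'. apply (fint_mono W M w HG); lra. }
  { intros b Hb. apply (fint_int_le W M w HG). lra. }
  assert (Hg : is_RInt_gen (fint W t x) (at_point t) (Rbar_locally p_infty) l).
  { apply conv_gen. exact Hl. intros b Hb. apply (fint_ex W M w HG); lra. }
  unfold V_W. change (fun tau => norm (W tau t x) ^ 2) with (fint W t x).
  rewrite (is_RInt_gen_unique (V := R_CompleteNormedModule) _ l Hg). exact Hl.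
Qed.

Lemma V_bounds {X : CompleteNormedModule R_AbsRing} (W : R -> R -> X -> X) M w :
  Good W M w -> forall t x, 0 <= t ->
  0 <= V_W W t x <= M^2/(2*w) * norm x ^ 2.
Proof.
  intros HG t x Ht. pose proof (V_conv W M w HG t x Ht) as Hc. split.
  - apply (conv_ge_const _ _ 0 t Hc). intros b Hb. apply RInt_ge_0. lra.
    apply (fint_ex W M w HG); lra. intros; apply fint_nonneg.
  - apply (conv_le_const _ _ _ t Hc). intros b Hb. apply (fint_int_le W M w HG); lra.
Qed.

Lemma V_split {X : CompleteNormedModule R_AbsRing} (W : R -> R -> X -> X) M w :
  Good W M w -> forall t s x, 0 <= t -> t <= s ->
  V_W W t x = RInt (fint W t x) t s + V_W W s (W s t x).
Proof.
  intros HG t s x Ht Hs. pose proof HG as [_ [_ [_ [_ [Hcomp _]]]]].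
  apply (conv_unique (fun b => RInt (fint W t x) t b)).
  apply (V_conv W M w HG t x Ht).
  apply (conv_shift _ (fun b => RInt (fint W s (W s t x)) s b) _ _ s).
  2: apply (V_conv W M w HG); lra.
  intros b Hb. rewrite <- (RInt_Chasles_R _ t s b).
  f_equal. apply RInt_ext. intros tau Htau. rewrite Rmin_left, Rmax_right in Htau by lra.
  unfold fint. rewrite (Hcomp tau s t x) by lra. reflexivity.
  apply (fint_ex W M w HG); lra. apply (fint_ex W M w HG); lra.
Qed.

Lemma V_lip1 {X : CompleteNormedModule R_AbsRing} (W : R -> R -> X -> X) M w :
  Good W M w -> forall s y z, 0 <= s ->
  V_W W s y - V_W W s z <= M^2/(2*w) * (norm y + norm z) * norm (minus y z).
Proof.
  intros HG s y z Hs. pose proof HG as [HM [Hw [Hlin [_ [_ [_ Hb]]]]]].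
  set (C := M^2 * (norm y + norm z) * norm (minus y z)).
  assert (HC : 0 <= C).
  { unfold C. pose proof (norm_ge_0 y); pose proof (norm_ge_0 z); pose proof (norm_ge_0 (minus y z)).
    apply Rmult_le_pos; [apply Rmult_le_pos|]; try apply pow2_ge_0; lra. }
  assert (Hpt : forall tau, s <= tau ->
     fint W s y tau <= fint W s z tau + C * exp (-((2*w)*(tau-s)))).
  { intros tau Htau. unfold fint, C.
    set (a := norm (W tau s y)). set (b := norm (W tau s z)).
    set (e := exp (-(w*(tau-s)))).
    assert (Ha : a <= M * e * norm y) by (apply Hb; lra).
    assert (Hb' : b <= M * e * norm z) by (apply Hb; lra).
    assert (Hd : Rabs (a - b) <= M * e * norm (minus y z)).
    { eapply Rle_trans. apply norm_triangle_inv.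
      rewrite <- (linear_minus _ _ _ (Hlin tau s ltac:(lra))). apply Hb; lra. }
    replace (-((2*w)*(tau-s))) with (-(w*(tau-s)) + -(w*(tau-s))) by ring.
    rewrite exp_plus. fold e.
    assert (He : 0 < e) by apply exp_pos.
    pose proof (norm_ge_0 (W tau s y)). pose proof (norm_ge_0 (W tau s z)).
    fold a b in H, H0.
    assert (Hab : a^2 - b^2 <= Rabs (a - b) * (a + b)).
    { replace (a^2 - b^2) with ((a - b) * (a + b)) by ring.
      apply Rmult_le_compat_r. lra. apply Rle_abs. }
    assert (Hab2 : Rabs (a - b) * (a + b) <= (M * e * norm (minus y z)) * (M * e * norm y + M * e * norm z)).
    { apply Rmult_le_compat. apply Rabs_pos. lra. exact Hd. lra. }
    replace (M ^ 2 * (norm y + norm z) * norm (minus y z) * (e * e)) with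
      ((M * e * norm (minus y z)) * (M * e * norm y + M * e * norm z)) by ring.
    lra. }
  destruct (exp_int (2*w) C s s ltac:(lra) HC ltac:(lra)) as [Hex0 _].
  apply (conv_le_const (fun b => RInt (fint W s y) s b - RInt (fint W s z) s b) _ _ s).
  - apply conv_minus; apply (V_conv W M w HG); lra.
  - intros b Hsb.
    destruct (exp_int (2*w) C s b ltac:(lra) HC Hsb) as [Hex Hle].
    assert (RInt (fint W s y) s b <= RInt (fun tau => fint W s z tau + C * exp (-((2*w)*(tau-s)))) s b).
    { apply RInt_le. lra. apply (fint_ex W M w HG); lra.
      apply ex_RInt_plus_R. apply (fint_ex W M w HG); lra. exact Hex.
      intros tau Ht. apply Hpt. lra. }
    rewrite RInt_plus_R in H. 2: apply (fint_ex W M w HG); lra. 2: exact Hex.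
    replace (M ^ 2 / (2 * w) * (norm y + norm z) * norm (minus y z)) with (C / (2*w))
      by (unfold C; field; lra).
    lra.
Qed.

Lemma nms {X : NormedModule R_AbsRing} (y z : X) : norm (minus z y) = norm (minus y z).
Proof. rewrite <- norm_opp. rewrite opp_minus. reflexivity. Qed.

Lemma V_lip {X : CompleteNormedModule R_AbsRing} (W : R -> R -> X -> X) M w :
  Good W M w -> forall s y z, 0 <= s ->
  Rabs (V_W W s y - V_W W s z) <= M^2/(2*w) * (norm y + norm z) * norm (minus y z).
Proof.
  intros HG s y z Hs.
  pose proof (V_lip1 W M w HG s y z Hs). pose proof (V_lip1 W M w HG s z y Hs).
  assert (norm (minus z y) = norm (minus y z)).
  { exact (@nms X y z). }
  rewrite H1 in H0. apply Rabs_le. split; lra.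
Qed.

Lemma W_le {X : CompleteNormedModule R_AbsRing} (W : R -> R -> X -> X) M w :
  Good W M w -> forall t s x, 0 <= s <= t -> norm (W t s x) <= M * norm x.
Proof.
  intros [HM [Hw [_ [_ [_ [_ Hb]]]]]] t s x Hst.
  eapply Rle_trans. apply Hb; auto.
  assert (exp (-(w*(t-s))) <= 1).
  { rewrite <- exp_0. apply exp_le'. assert (0 <= w*(t-s)) by (apply Rmult_le_pos; lra). lra. }
  pose proof (norm_ge_0 x). pose proof (exp_pos (-(w*(t-s)))).
  apply Rmult_le_compat_r. lra. nra.
Qed.

Lemma fint_le_const {X : CompleteNormedModule R_AbsRing} (W : R -> R -> X -> X) M w :
  Good W M w -> forall t x s, 0 <= t <= s ->
  RInt (fint W t x) t s <= (s - t) * (M^2 * norm x ^ 2).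
Proof.
  intros HG t x s Hts. pose proof HG as [HM [Hw _]].
  rewrite <- RInt_const_R. apply RInt_le. lra. apply (fint_ex W M w HG); lra.
  apply ex_RInt_const_R. intros tau Htau. unfold fint.
  pose proof (W_le W M w HG tau t x ltac:(lra)). pose proof (norm_ge_0 (W tau t x)).
  replace (M ^ 2 * norm x ^ 2) with ((M * norm x)^2) by ring.
  apply pow_incr. lra.
Qed.

Lemma fint_ge_const {X : CompleteNormedModule R_AbsRing} (W : R -> R -> X -> X) M w :
  Good W M w -> forall t x s L, 0 <= t <= s -> (forall tau, t < tau < s -> L <= fint W t x tau) ->
  (s - t) * L <= RInt (fint W t x) t s.
Proof.
  intros HG t x s L Hts HL.
  rewrite <- RInt_const_R. apply RInt_le. lra. apply ex_RInt_const_R.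
  apply (fint_ex W M w HG); lra. exact HL.
Qed.

Lemma W_lower {X : CompleteNormedModule R_AbsRing} (W : R -> R -> X -> X) M w :
  Good W M w -> forall t x eta, 0 <= t -> 0 < eta -> exists delta, 0 < delta /\
   forall tau, t <= tau < t + delta -> norm x - eta < norm (W tau t x).
Proof.
  intros HG t x eta Ht Heta.
  destruct (W_diag_cont W M w HG t x Ht eta Heta) as [d [Hd Hd']].
  exists d. split; auto. intros tau Htau.
  assert (H := Hd' tau t ltac:(lra) ltac:(rewrite Rabs_pos_eq; lra) ltac:(rewrite Rminus_diag, Rabs_R0; lra)).
  pose proof (norm_triangle_inv (W tau t x) x) as H0.
  pose proof (Rabs_Ropp (norm (W tau t x) - norm x)) as H1.
  pose proof (Rle_abs (-(norm (W tau t x) - norm x))) as H2.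
  assert (H3 := Rle_lt_trans _ _ _ H0 H). lra.
Qed.

Lemma V_pos {X : CompleteNormedModule R_AbsRing} (W : R -> R -> X -> X) M w :
  Good W M w -> forall t x, 0 <= t -> x <> zero -> 0 < V_W W t x.
Proof.
  intros HG t x Ht Hx.
  assert (Hn : 0 < norm x).
  { pose proof (norm_ge_0 x). destruct H as [H|H]; auto. exfalso; apply Hx. exact (@norm_eq_zero R_AbsRing X x (eq_sym H)). }
  destruct (W_lower W M w HG t x (norm x / 2) Ht ltac:(lra)) as [d [Hd Hd']].
  assert (Hlow : (d/2) * ((norm x / 2)^2) <= RInt (fint W t x) t (t + d/2)).
  { replace (d/2) with (t + d/2 - t) at 1 by ring.
    apply (fint_ge_const W M w HG). lra. intros tau Htau. unfold fint.
    apply pow_incr. split. lra. left. specialize (Hd' tau ltac:(lra)). lra. }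
  assert (0 < (d/2) * ((norm x / 2)^2)) by (apply Rmult_lt_0_compat; [lra| apply pow_lt; lra]).
  apply Rlt_le_trans with ((d/2) * ((norm x / 2)^2)). auto.
  apply (conv_ge_const _ _ _ (t + d/2) (V_conv W M w HG t x Ht)).
  intros b Hb. eapply Rle_trans. apply Hlow. apply (fint_mono W M w HG); lra.
Qed.

Lemma V_time {X : CompleteNormedModule R_AbsRing} (W : R -> R -> X -> X) M w :
  Good W M w -> forall t s x, 0 <= t <= s ->
  Rabs (V_W W t x - V_W W s x) <=
   (s - t) * (M^2 * norm x ^ 2) + M^2/(2*w) * (norm x + M * norm x) * norm (minus (W s t x) x).
Proof.
  intros HG t s x Hts. pose proof HG as [HM [Hw _]].
  rewrite (V_split W M w HG t s x) by lra.
  pose proof (fint_le_const W M w HG t x s Hts).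
  assert (0 <= RInt (fint W t x) t s).
  { apply RInt_ge_0. lra. apply (fint_ex W M w HG); lra. intros; apply fint_nonneg. }
  pose proof (V_lip W M w HG s (W s t x) x ltac:(lra)).
  pose proof (W_le W M w HG s t x Hts).
  assert (M ^ 2 / (2 * w) * (norm (W s t x) + norm x) * norm (minus (W s t x) x) <=
          M ^ 2 / (2 * w) * (norm x + M * norm x) * norm (minus (W s t x) x)).
  { apply Rmult_le_compat_r. apply norm_ge_0. apply Rmult_le_compat_l.
    apply Rdiv_le_0_compat. apply pow2_ge_0. lra. lra. }
  apply Rabs_le. split.
  - apply Rabs_le_between' in H1 || (apply Rabs_def2b in H1) || idtac.
    pose proof (Rle_abs (-(V_W W s (W s t x) - V_W W s x))). rewrite Rabs_Ropp in H4. lra.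
  - pose proof (Rle_abs (V_W W s (W s t x) - V_W W s x)). lra.
Qed.

Lemma V_cont {X : CompleteNormedModule R_AbsRing} (W : R -> R -> X -> X) M w :
  Good W M w -> forall t x, 0 <= t ->
  filterlim (fun p : R * X => V_W W (fst p) (snd p))
    (within (fun p : R * X => 0 <= fst p /\ True) (locally (t, x)))
    (locally (V_W W t x)).
Proof.
  intros HG t x Ht. pose proof HG as [HM [Hw _]].
  apply filterlim_locally. intros eps.
  set (n := norm x). set (c := M^2/(2*w)).
  assert (Hn : 0 <= n) by apply norm_ge_0.
  assert (Hc : 0 < c) by (unfold c; apply Rdiv_lt_0_compat; [apply pow_lt|]; lra).
  assert (Hnf := @norm_factor_gt_0 R_AbsRing X). set (nf := @norm_factor R_AbsRing X) in *.
  set (eta := eps / (4 * (c * (n + M * n) + 1))).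
  assert (Hcn : 0 <= c * (n + M * n)) by (apply Rmult_le_pos; [lra|nra]).
  assert (Heta : 0 < eta) by (unfold eta; apply Rdiv_lt_0_compat; [apply cond_pos|lra]).
  destruct (W_diag_cont W M w HG t x Ht eta Heta) as [dW [HdW HdW']].
  set (A := c * (2 * n + 1) * nf + M^2 * n^2 + 1).
  assert (HA1 : 0 <= c * (2 * n + 1) * nf) by (apply Rmult_le_pos; [apply Rmult_le_pos|]; lra).
  assert (HA2 : 0 <= M^2 * n^2) by (apply Rmult_le_pos; apply pow2_ge_0).
  assert (HA : 0 < A) by (unfold A; lra).
  pose proof (cond_pos eps) as Heps.
  set (d := Rmin dW (Rmin (1/nf) (eps / (4 * A)))).
  assert (Hd : 0 < d).
  { unfold d. apply Rmin_pos. auto. apply Rmin_pos; apply Rdiv_lt_0_compat; lra. }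
  assert (Hd1 : d <= dW) by apply Rmin_l.
  assert (Hd2 : d <= 1/nf) by (eapply Rle_trans; [apply Rmin_r|apply Rmin_l]).
  assert (Hd3 : d <= eps / (4*A)) by (eapply Rle_trans; [apply Rmin_r|apply Rmin_r]).
  exists (mkposreal d Hd). intros [t' x'] [Hbt Hbx] [Ht' _]. simpl in *.
  apply ball_R' in Hbt.
  pose proof (@norm_compat2 R_AbsRing X x x' (mkposreal d Hd) Hbx) as Hbx0. clear Hbx. rename Hbx0 into Hbx. simpl in Hbx. fold nf in Hbx.
  assert (Hnfd : nf * d <= 1) by (apply Rmult_le_reg_l with (/nf); [apply Rinv_0_lt_compat; lra|];
     rewrite <- Rmult_assoc, Rinv_l, Rmult_1_l, Rmult_1_r by lra; unfold Rdiv in Hd2; lra).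
  assert (HAd : A * d <= eps / 4).
  { apply Rmult_le_reg_l with (/A). apply Rinv_0_lt_compat; lra.
    rewrite <- Rmult_assoc, Rinv_l, Rmult_1_l by lra. 
    replace (/ A * (eps / 4)) with (eps / (4 * A)) by (field; lra). auto. }
  apply ball_R.
  assert (T1 : Rabs (V_W W t' x' - V_W W t' x) <= eps / 4).
  { eapply Rle_trans. apply (V_lip W M w HG t' x' x Ht').
    assert (Hx' : norm x' <= n + 1).
    { assert (H3 := Rlt_le_trans _ _ _ Hbx Hnfd).
      assert (H0 := Rle_lt_trans _ _ _ (norm_triangle_inv x' x) H3).
      pose proof (Rle_abs (norm x' - norm x)). assert (Hx0 : norm x' - n < 1) by (eapply Rle_lt_trans; [apply Rle_abs|exact H0]). lra. }
    change (M^2/(2*w)) with c. change (norm x) with n.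
    pose proof (norm_ge_0 x') as Hx'0. pose proof (norm_ge_0 (minus x' x)) as Hm0.
    assert (Hbx' : norm (minus x' x) <= nf * d) by (left; exact Hbx).
    apply Rle_trans with (c * (2*n+1) * (nf*d)).
    apply Rmult_le_compat; [apply Rmult_le_pos; lra | exact Hm0 | apply Rmult_le_compat_l; lra | exact Hbx'].
    assert (c * (2 * n + 1) * (nf * d) <= A * d).
    { unfold A. replace (c * (2 * n + 1) * (nf * d)) with ((c * (2 * n + 1) * nf) * d) by ring.
      apply Rmult_le_compat_r; lra. }
    lra. }
  assert (Heta3 : c * (n + M * n) * eta <= eps / 4).
  { unfold eta. replace (c * (n + M * n) * (eps / (4 * (c * (n + M * n) + 1))))
      with ((eps/4) * ((c * (n + M * n)) / (c * (n + M * n) + 1))) by (field; lra).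
    assert (c * (n + M * n) / (c * (n + M * n) + 1) <= 1).
    { apply Rmult_le_reg_r with (c * (n + M * n) + 1). lra.
      unfold Rdiv. rewrite Rmult_assoc, Rinv_l by lra. lra. }
    assert (0 <= eps / 4) by lra. nra. }
  assert (Hdd : Rabs (t' - t) * (M^2 * n^2) <= eps / 4).
  { apply Rle_trans with (A * d). apply Rle_trans with (d * (M^2 * n^2)).
    apply Rmult_le_compat_r; lra. unfold A. nra. lra. }
  assert (T2 : Rabs (V_W W t' x - V_W W t x) < 2 * eps / 4 + eps / 4 * 0 + eps/4 * 0 + 0 \/
               Rabs (V_W W t' x - V_W W t x) <= 2 * eps / 4).
  { right. destruct (Rle_dec t t') as [Hle|Hlt].
    - pose proof (V_time W M w HG t t' x ltac:(lra)) as HV. fold n in HV. change (M ^ 2 / (2 * w)) with c in HV.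
      rewrite <- Rabs_Ropp in HV. replace (- (V_W W t x - V_W W t' x)) with (V_W W t' x - V_W W t x) in HV by ring.
      assert (norm (minus (W t' t x) x) < eta) by (apply HdW'; try lra; rewrite ?Rminus_diag, ?Rabs_R0; lra).
      assert (c * (n + M * n) * norm (minus (W t' t x) x) <= c * (n + M * n) * eta)
        by (apply Rmult_le_compat_l; lra).
      rewrite Rabs_pos_eq in Hdd by lra. lra.
    - pose proof (V_time W M w HG t' t x ltac:(lra)) as HV. fold n in HV. change (M ^ 2 / (2 * w)) with c in HV.
      assert (norm (minus (W t t' x) x) < eta) by (apply HdW'; try lra; rewrite ?Rminus_diag, ?Rabs_R0; lra).
      assert (c * (n + M * n) * norm (minus (W t t' x) x) <= c * (n + M * n) * eta)
        by (apply Rmult_le_compat_l; lra).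
      rewrite Rabs_left in Hdd by lra. lra. }
  replace (V_W W t' x' - V_W W t x) with ((V_W W t' x' - V_W W t' x) + (V_W W t' x - V_W W t x)) by ring.
  eapply Rle_lt_trans. apply Rabs_triang. destruct T2; lra.
Qed.

Lemma minus_tri {V : NormedModule R_AbsRing} (a b c : V) :
  norm (minus a c) <= norm (minus a b) + norm (minus b c).
Proof.
  replace (minus a c) with (plus (minus a b) (minus b c)). apply norm_triangle.
  unfold minus. rewrite <- plus_assoc, (plus_assoc (opp b)), plus_opp_l, plus_zero_l. reflexivity.
Qed.

Lemma minus_zero_eq {V : NormedModule R_AbsRing} (a b : V) : minus a b = zero -> a = b.
Proof.
  intros H.
  assert (a = plus (minus a b) b) by (unfold minus; rewrite <- plus_assoc, plus_opp_l, plus_zero_r; reflexivity).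
  rewrite H in H0. rewrite plus_zero_l in H0. exact H0.
Qed.

Lemma norm_le_tri {V : NormedModule R_AbsRing} (a b : V) : norm a <= norm b + norm (minus a b).
Proof.
  pose proof (norm_triangle_inv a b). pose proof (Rle_abs (norm a - norm b)). lra.
Qed.

Lemma input_bound {U : CompleteNormedModule R_AbsRing} (u : R -> U) :
  PC_input u -> 0 <= input_norm u /\ forall s, 0 <= s -> norm (u s) <= input_norm u.
Proof.
  intros [[Mu HMu] _]. unfold input_norm.
  set (E := fun r => exists t, 0 <= t /\ r = norm (u t)).
  destruct (Lub_Rbar_correct E) as [Hub Hlub].
  assert (H1 : Rbar_le (Lub_Rbar E) (Finite Mu)).
  { apply Hlub. intros r [t [Ht ->]]. simpl. apply HMu; auto. }
  assert (H2 : forall s, 0 <= s -> Rbar_le (Finite (norm (u s))) (Lub_Rbar E)).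
  { intros s Hs. apply Hub. exists s; auto. }
  specialize (H2 0 (Rle_refl 0)) as H0.
  destruct (Lub_Rbar E) as [l| |]; simpl in *.
  - split. pose proof (norm_ge_0 (u 0)); lra.
    intros s Hs. specialize (H2 s Hs). simpl in H2. exact H2.
  - contradiction.
  - contradiction.
Qed.

Lemma lie_reduce {X : CompleteNormedModule R_AbsRing} (V : R -> X -> R) t x T phi r0 d :
  0 < d <= T - t ->
  (forall h, 0 < h < d -> (V (t + h) (phi (t + h)) - V t x) / h <= r0) ->
  Rbar_le (lie_derivative V t x T phi) (Finite r0).
Proof.
  intros Hd Hq. unfold lie_derivative.
  set (E2 := fun q => exists h, 0 < h < d /\ q = (V (t + h) (phi (t + h)) - V t x) / h).
  assert (HL : Rbar_le (Lub_Rbar E2) (Finite r0)).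
  { destruct (Lub_Rbar_correct E2) as [_ Hl]. apply Hl.
    intros q [h [Hh ->]]. simpl. apply Hq; auto. }
  assert (HL2 : Rbar_le (Finite ((V (t + d/2) (phi (t + d/2)) - V t x) / (d/2))) (Lub_Rbar E2)).
  { destruct (Lub_Rbar_correct E2) as [Hu _]. apply Hu. exists (d/2). split; [lra|auto]. }
  apply Rbar_le_trans with (Finite (real (Lub_Rbar E2))).
  - match goal with |- Rbar_le (Glb_Rbar ?E) _ => destruct (Glb_Rbar_correct E) as [Hlb _] end.
    apply Hlb. exists d. split; auto.
  - destruct (Lub_Rbar E2) as [l| |]; simpl in *; auto; contradiction.
Qed.

Lemma phi_start {X U : CompleteNormedModule R_AbsRing} (W : R -> R -> X -> X) M w
  (Psi : R -> X -> U -> X) t x u T phi :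
  Good W M w -> 0 <= t -> t < T -> mild_solution W Psi t x u T phi -> phi t = x.
Proof.
  intros HG Ht HT [_ Hint]. pose proof HG as [_ [_ [_ [Hid _]]]].
  specialize (Hint t (conj (Rle_refl t) HT)).
  assert (H0 := is_RInt_point (V := X) (fun s => W t s (Psi s (phi s) (u s))) t).
  assert (E : minus (phi t) (W t t x) = zero).
  { rewrite <- (is_RInt_unique _ _ _ _ Hint). exact (is_RInt_unique _ _ _ _ H0). }
  apply (@minus_zero_eq X) in E. rewrite E. apply Hid; auto.
Qed.

Lemma phi_cont {X U : CompleteNormedModule R_AbsRing} (W : R -> R -> X -> X) M w
  (Psi : R -> X -> U -> X) t x u T phi :
  Good W M w -> 0 <= t -> t < T -> mild_solution W Psi t x u T phi ->
  forall eta, 0 < eta -> exists d, 0 < d /\ forall s, t <= s < T -> s - t < d ->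
    norm (minus (phi s) x) < eta.
Proof.
  intros HG Ht HT Hm eta Heta.
  pose proof (phi_start W M w Psi t x u T phi HG Ht HT Hm) as Hx.
  destruct Hm as [Hpc _]. specialize (Hpc t (conj (Rle_refl t) HT)). rewrite Hx in Hpc.
  assert (Hnf := @norm_factor_gt_0 R_AbsRing X).
  pose (eps := mkposreal (eta / norm_factor) (Rdiv_lt_0_compat _ _ Heta Hnf)).
  destruct (proj1 (filterlim_locally _ _) Hpc eps) as [d Hd].
  exists d. split. apply cond_pos. intros s Hs Hsd.
  assert (Hb := Hd s (ball_R t s d ltac:(rewrite Rabs_pos_eq; lra)) Hs).
  pose proof (@norm_compat2 R_AbsRing X _ _ eps Hb) as Hb2. simpl in Hb2.
  replace (norm_factor * (eta / norm_factor)) with eta in Hb2 by (field; lra). exact Hb2.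
Qed.

Lemma mild_bound {X U : CompleteNormedModule R_AbsRing} (W : R -> R -> X -> X) M w
  (Psi : R -> X -> U -> X) t x u T phi :
  Good W M w -> 0 <= t -> mild_solution W Psi t x u T phi ->
  forall tau P, t <= tau < T -> (forall r, t <= r <= tau -> norm (Psi r (phi r) (u r)) <= P) ->
  norm (minus (phi tau) (W tau t x)) <= (tau - t) * (M * P).
Proof.
  intros HG Ht [_ Hint] tau P Htau HP. pose proof HG as [HM _].
  apply (norm_RInt_le_const (fun s => W tau s (Psi s (phi s) (u s))) t tau). lra.
  intros r Hr. eapply Rle_trans. apply (W_le W M w HG). lra.
  apply Rmult_le_compat_l. lra. apply HP; auto.
  apply Hint; auto.
Qed.

Lemma norm_zeroC {X : CompleteNormedModule R_AbsRing} : norm (zero : X) = 0.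
Proof. exact (@norm_zero R_AbsRing X). Qed.

Lemma lie_main {X U : CompleteNormedModule R_AbsRing} (W : R -> R -> X -> X) M w
  (B : R -> U -> X) (psi : R -> X -> U -> X) Mb b rho :
  Good W M w -> 0 <= Mb -> 0 < b -> 0 < rho ->
  (forall t v, 0 <= t -> norm (B t v) <= Mb * norm v) ->
  (forall t x v, 0 <= t -> norm x <= rho -> norm v <= rho ->
      norm (psi t x v) <= (1 / (64 * (M^2/(2*w)) * M^2)) * norm x + b * norm v) ->
  forall t x u, 0 <= t -> norm x <= rho/2 -> PC_input u -> input_norm u <= rho ->
   norm x >= (64 * (M^2/(2*w)) * M^2 * (Mb + b) + 1) * input_norm u ->
   forall T phi, t < T -> mild_solution W (fun t x v => plus (B t v) (psi t x v)) t x u T phi ->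
   Rbar_le (lie_derivative (V_W W) t x T phi) (Finite (- (V_W W t x / (4 * (M^2/(2*w)))))).
Proof.
  intros HG HMb Hb Hrho HB Hpsi t x u Ht Hx Hu Hur Hk T phi HT Hm.
  pose proof HG as [HM [Hw [Hlin _]]].
  set (c := M^2/(2*w)) in *.
  assert (Hc : 0 < c) by (unfold c; apply Rdiv_lt_0_compat; [apply pow_lt|]; lra).
  set (a := 1 / (64 * c * M^2)) in *.
  assert (HM2 : 0 < M^2) by (apply pow_lt; lra).
  assert (Ha : 0 < a) by (unfold a; apply Rdiv_lt_0_compat; [lra|]; apply Rmult_lt_0_compat; lra).
  destruct (input_bound u Hu) as [He0 Hue].
  set (e := input_norm u) in *.
  set (n := norm x) in *.
  assert (Hn0 : 0 <= n) by apply norm_ge_0.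
  set (Psi := fun t x v => plus (B t v) (psi t x v)) in *.
  assert (HPsi : forall r, t <= r -> norm (phi r) <= rho ->
            norm (Psi r (phi r) (u r)) <= (Mb + b) * e + a * norm (phi r)).
  { intros r Hr Hpr. unfold Psi. eapply Rle_trans. apply (@norm_triangle R_AbsRing X).
    assert (Hur' : norm (u r) <= e) by (apply Hue; lra).
    pose proof (HB r (u r) ltac:(lra)). pose proof (Hpsi r (phi r) (u r) ltac:(lra) Hpr ltac:(lra)).
    pose proof (norm_ge_0 (u r)).
    assert (Mb * norm (u r) <= Mb * e) by (apply Rmult_le_compat_l; lra).
    assert (b * norm (u r) <= b * e) by (apply Rmult_le_compat_l; lra).
    lra. }
  destruct (Req_dec n 0) as [Hn|Hn].
  -
    assert (Hx0 : x = zero) by exact (@norm_eq_zero R_AbsRing X x Hn).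
    assert (He : e = 0).
    { assert (0 <= 64 * c * M^2 * (Mb + b)) by (apply Rmult_le_pos; [apply Rmult_le_pos|]; lra).
      nra. }
    destruct (phi_cont W M w Psi t x u T phi HG Ht HT Hm rho Hrho) as [d1 [Hd1 Hd1']].
    set (d := Rmin (Rmin (d1/2) ((T - t)/2)) (1 / (2 * M * a))).
    assert (Hd : 0 < d).
    { unfold d. apply Rmin_pos. apply Rmin_pos; lra. apply Rdiv_lt_0_compat. lra.
      apply Rmult_lt_0_compat; lra. }
    assert (Hda : d <= d1/2) by (unfold d; eapply Rle_trans; [apply Rmin_l|apply Rmin_l]).
    assert (Hdb : d <= (T-t)/2) by (unfold d; eapply Rle_trans; [apply Rmin_l|apply Rmin_r]).
    assert (Hdc : d <= 1 / (2 * M * a)) by (unfold d; apply Rmin_r).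
    assert (Hsm : forall s, t <= s <= t + d -> norm (phi s) < rho).
    { intros s Hs. pose proof (Hd1' s ltac:(lra) ltac:(lra)).
      pose proof (@norm_le_tri X (phi s) x). fold n in H0. 
      assert (H1 := Rle_lt_trans _ _ _ H0 (Rplus_lt_compat_l n _ _ H)). lra. }
    destruct (completeness (fun r => exists s, t <= s <= t + d /\ r = norm (phi s))) as [m [Hub Hlub]].
    { exists rho. intros r [s [Hs ->]]. left. apply Hsm; auto. }
    { exists (norm (phi t)). exists t. split; [lra|auto]. }
    assert (Hm0 : 0 <= m) by (apply Rle_trans with (norm (phi t)); [apply norm_ge_0|apply Hub; exists t; split; [lra|auto]]).
    assert (Hhalf : forall s, t <= s <= t + d -> norm (phi s) <= m / 2).
    { intros s Hs.
      assert (HD := mild_bound W M w Psi t x u T phi HG Ht Hm s (a * m) ltac:(lra)).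
      assert (HD' : norm (minus (phi s) (W s t x)) <= (s - t) * (M * (a * m))).
      { apply HD. intros r Hr. eapply Rle_trans. apply HPsi. lra. left; apply Hsm; lra.
        rewrite He. assert (norm (phi r) <= m) by (apply Hub; exists r; split; [lra|auto]).
        assert (a * norm (phi r) <= a * m) by (apply Rmult_le_compat_l; lra). lra. }
      pose proof (@norm_le_tri X (phi s) (W s t x)).
      pose proof (W_le W M w HG s t x ltac:(lra)). fold n in H0. rewrite Hn in H0.
      assert (Hx1 : (s - t) * (M * (a * m)) <= d * (M * a) * m).
      { replace ((s - t) * (M * (a * m))) with ((s-t) * (M * a) * m) by ring.
        apply Rmult_le_compat_r. lra. apply Rmult_le_compat_r. nra. lra. }
      assert (Hx2 : d * (M * a) * m <= m / 2).
      { assert (d * (M * a) <= 1/2).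
        { apply Rle_trans with (1 / (2 * M * a) * (M * a)). apply Rmult_le_compat_r. nra. auto.
          right. field. split; lra. }
        nra. }
      assert (H2 := Rle_trans _ _ _ HD' Hx1).
      assert (H3 := Rle_trans _ _ _ H (Rplus_le_compat _ _ _ _ H0 H2)). lra. }
    assert (Hmz : m <= 0).
    { assert (m <= m / 2). apply Hlub. intros r [s [Hs ->]]. apply Hhalf; auto. lra. }
    assert (Hphi0 : forall s, t <= s <= t + d -> phi s = zero).
    { intros s Hs. apply (@norm_eq_zero R_AbsRing X). pose proof (norm_ge_0 (phi s)).
      assert (norm (phi s) <= m) by (apply Hub; exists s; split; [lra|auto]). lra. }
    assert (HV0 : forall s, 0 <= s -> V_W W s zero = 0).
    { intros s Hs. pose proof (V_bounds W M w HG s zero Hs). rewrite norm_zeroC in H.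
      fold c in H. replace (c * 0 ^ 2) with 0 in H by ring. lra. }
    apply (lie_reduce (V_W W) t x T phi _ d). split; lra.
    intros h Hh. rewrite Hphi0 by lra. rewrite Hx0. rewrite !HV0 by lra.
    unfold Rdiv. rewrite Rminus_diag, !Rmult_0_l, Ropp_0. lra.
  -
    assert (Hnp : 0 < n) by lra.
    destruct (phi_cont W M w Psi t x u T phi HG Ht HT Hm n Hnp) as [d1 [Hd1 Hd1']].
    destruct (W_lower W M w HG t x (n/10) Ht ltac:(lra)) as [d2 [Hd2 Hd2']].
    set (d := Rmin (Rmin d1 d2) (Rmin (c * M^2) (T - t))).
    assert (Hd : 0 < d).
    { unfold d. apply Rmin_pos; apply Rmin_pos; try lra. apply Rmult_lt_0_compat; lra. }
    assert (Hda : d <= d1) by (unfold d; eapply Rle_trans; [apply Rmin_l|apply Rmin_l]).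
    assert (Hdb : d <= d2) by (unfold d; eapply Rle_trans; [apply Rmin_l|apply Rmin_r]).
    assert (Hdc : d <= c * M^2) by (unfold d; eapply Rle_trans; [apply Rmin_r|apply Rmin_l]).
    assert (Hdd : d <= T - t) by (unfold d; eapply Rle_trans; [apply Rmin_r|apply Rmin_r]).
    apply (lie_reduce (V_W W) t x T phi _ d). split; lra.
    intros h Hh.
    set (tau := t + h).
    assert (Hr : forall r, t <= r <= tau -> norm (phi r) <= 2 * n).
    { intros r Hr. pose proof (Hd1' r ltac:(unfold tau in *; lra) ltac:(unfold tau in *; lra)).
      pose proof (@norm_le_tri X (phi r) x). fold n in H0.
      assert (H1 := Rle_lt_trans _ _ _ H0 (Rplus_lt_compat_l n _ _ H)). lra. }
    set (Q := 3 * n / (64 * c * M)).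
    assert (HMP : M * ((Mb + b) * e + a * (2 * n)) <= Q).
    { assert (H1 : 64 * c * M^2 * ((Mb + b) * e) <= n).
      { assert (0 <= 64 * c * M ^ 2 * (Mb + b)) by (apply Rmult_le_pos; [apply Rmult_le_pos|]; lra).
        nra. }
      assert (H2 : (Mb + b) * e <= n / (64 * c * M^2)).
      { apply Rmult_le_reg_l with (64 * c * M^2). apply Rmult_lt_0_compat; lra.
        replace (64 * c * M ^ 2 * (n / (64 * c * M ^ 2))) with n by (field; lra). lra. }
      unfold Q, a. 
      replace (3 * n / (64 * c * M)) with (M * (n / (64 * c * M^2) + 1 / (64 * c * M ^ 2) * (2 * n)))
        by (field; lra).
      apply Rmult_le_compat_l. lra. lra. }
    set (D := norm (minus (phi tau) (W tau t x))).
    assert (HD : D <= h * Q).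
    { unfold D. eapply Rle_trans.
      apply (mild_bound W M w Psi t x u T phi HG Ht Hm tau ((Mb + b) * e + a * (2 * n))).
      unfold tau; lra.
      intros r Hr0. eapply Rle_trans. apply HPsi. lra. pose proof (Hr r Hr0). lra.
      pose proof (Hr r Hr0). assert (a * norm (phi r) <= a * (2 * n)) by (apply Rmult_le_compat_l; lra). lra.
      unfold tau. replace (t + h - t) with h by ring. apply Rmult_le_compat_l; lra. }
    assert (HD0 : 0 <= D) by apply norm_ge_0.
    assert (HQ0 : 0 <= Q) by (unfold Q; apply Rdiv_le_0_compat; [lra|]; apply Rmult_lt_0_compat; lra).
    set (z := W tau t x).
    assert (Hz : norm z <= M * n) by (apply (W_le W M w HG); unfold tau; lra).
    assert (Hpz : norm (phi tau) <= norm z + D) by exact (@norm_le_tri X (phi tau) z).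
    assert (HDM : D <= M * n).
    { apply Rle_trans with (h * Q). auto. apply Rle_trans with (c * M^2 * Q).
      apply Rmult_le_compat_r; lra. unfold Q. replace (c * M^2 * (3 * n / (64 * c * M))) with (3 * M * n / 64) by (field; lra). nra. }
    assert (Hlip := V_lip1 W M w HG tau (phi tau) z ltac:(unfold tau; lra)).
    fold c in Hlip.
    assert (Hlip2 : c * (norm (phi tau) + norm z) * norm (minus (phi tau) z) <= 9 * h * n^2 / 64).
    { change (norm (minus (phi tau) z)) with D.
      apply Rle_trans with (c * (3 * M * n) * (h * Q)).
      apply Rmult_le_compat. apply Rmult_le_pos. lra. pose proof (norm_ge_0 (phi tau)); pose proof (norm_ge_0 z); lra.
      auto. apply Rmult_le_compat_l; lra. auto.
      unfold Q. right. field. split; lra. }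
    assert (Hsplit := V_split W M w HG t tau x Ht ltac:(unfold tau; lra)).
    fold z in Hsplit.
    assert (Hlow : (tau - t) * ((9 * n / 10)^2) <= RInt (fint W t x) t tau).
    { apply (fint_ge_const W M w HG). unfold tau; lra. intros r Hr0. unfold fint.
      apply pow_incr. split. lra. left. 
      specialize (Hd2' r ltac:(unfold tau in *; lra)). fold n in Hd2'. lra. }
    replace (tau - t) with h in Hlow by (unfold tau; ring).
    pose proof (V_bounds W M w HG t x Ht) as [_ HVb]. fold c n in HVb.
    assert (Hnum : V_W W tau (phi tau) - V_W W t x <= - (h * n^2 / 4)).
    { assert (h * (9 * n / 10) ^ 2 = 81 * h * n^2 / 100) by (field).
      assert (0 <= h * n^2) by (apply Rmult_le_pos; [lra|apply pow2_ge_0]).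
      lra. }
    apply Rmult_le_reg_l with h. lra.
    replace (h * ((V_W W tau (phi tau) - V_W W t x) / h)) with
      (V_W W tau (phi tau) - V_W W t x) by (field; lra).
    assert (h * - (V_W W t x / (4 * c)) >= - (h * n ^ 2 / 4)).
    { assert (V_W W t x / (4 * c) <= n^2 / 4).
      { apply Rmult_le_reg_l with (4 * c). lra.
        replace (4 * c * (V_W W t x / (4 * c))) with (V_W W t x) by (field; lra).
        replace (4 * c * (n ^ 2 / 4)) with (c * n^2) by field. lra. }
      nra. }
    lra.
Qed.

Theorem mainTheorem12 (X U : CompleteNormedModule R_AbsRing)
  (DA : R -> X -> Prop) (A : R -> X -> X) (W : R -> R -> X -> X)
  (B : R -> U -> X) (psi : R -> X -> U -> X) :
  evolution_family DA A W ->
  B_cont_bounded B ->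
  H1 (fun t x v => plus (B t v) (psi t x v)) ->
  H2 psi ->
  zero_UGAS W ->
  nc_LISS_Lyapunov_impl W (fun t x v => plus (B t v) (psi t x v))
    (fun _ => True) (V_W W).
Proof.
  intros Hef HBc _ HH2 HU.
  destruct Hef as [_ [Hlin [Hid [Hcomp [Hcont _]]]]].
  destruct (exp_bound_exists W Hlin Hcomp HU) as [M [w [HM [Hw Hb]]]].
  assert (HG : Good W M w)
    by exact (conj HM (conj Hw (conj Hlin (conj Hid (conj Hcomp (conj Hcont Hb)))))).
  assert (Hc : 0 < M^2/(2*w)) by (apply Rdiv_lt_0_compat; [apply pow_lt|]; lra).
  assert (HM2 : 0 < M^2) by (apply pow_lt; lra).
  destruct HBc as [_ [_ [MB HMB]]].
  set (Mb := Rmax MB 0).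
  assert (HMb : 0 <= Mb) by apply Rmax_r.
  assert (HB : forall t v, 0 <= t -> norm (B t v) <= Mb * norm v).
  { intros t v Ht. eapply Rle_trans. apply HMB; auto. apply Rmult_le_compat_r.
    apply norm_ge_0. apply Rmax_l. }
  assert (Ha : 0 < 1 / (64 * (M^2/(2*w)) * M^2)).
  { apply Rdiv_lt_0_compat. lra. apply Rmult_lt_0_compat; lra. }
  destruct (HH2 _ Ha) as [b [rho [Hb0 [Hrho Hpsi]]]].
  set (c := M^2/(2*w)) in *.
  set (K := 64 * c * M^2 * (Mb + b) + 1).
  assert (HK : 0 < K).
  { unfold K. assert (0 <= 64 * c * M^2 * (Mb + b)) by (apply Rmult_le_pos; [apply Rmult_le_pos|]; lra). lra. }
  unfold nc_LISS_Lyapunov_impl.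
  split. exact I.
  split. intros x _. exists 1. split. lra. intros; exact I.
  split. intros t x Ht _. exact (V_cont W M w HG t x Ht).
  split. intros t x Ht _. apply (V_bounds W M w HG t x Ht).
  split. intros t Ht. pose proof (V_bounds W M w HG t zero Ht) as Hz.
    rewrite norm_zeroC in Hz. fold c in Hz. replace (c * 0 ^ 2) with 0 in Hz by ring. lra.
  exists (fun r => c * r^2), (fun r => K * r), (fun r => r / (4 * c)), (rho/2), rho.
  split.
  { split. split. simpl; ring. split. intros r _. reg.
    intros r s Hr Hrs. apply Rmult_lt_compat_l. lra. simpl; nra.
    intros M'. exists (Rabs M' / c + 1). split.
    assert (0 <= Rabs M' / c) by (apply Rdiv_le_0_compat; [apply Rabs_pos|lra]). lra.
    set (r := Rabs M' / c + 1).
    assert (Hr1 : 1 <= r) by (unfold r; assert (0 <= Rabs M' / c) by (apply Rdiv_le_0_compat; [apply Rabs_pos|lra]); lra).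
    assert (c * r <= c * r^2) by (apply Rmult_le_compat_l; [lra|]; simpl; nra).
    assert (c * r = Rabs M' + c) by (unfold r; field; lra).
    pose proof (Rle_abs M'). lra. }
  split.
  { split. simpl; ring. split. intros r _. reg.
    intros r s Hr Hrs. apply Rmult_lt_compat_l; lra. }
  split.
  { split. unfold Rdiv; ring. split. intros r _. reg.
    intros r Hr. apply Rdiv_lt_0_compat; lra. }
  split. lra. split. exact Hrho.
  split. intros; exact I.
  split.
  { intros t x Ht _ Hx. split. apply (V_pos W M w HG t x Ht Hx).
    apply (V_bounds W M w HG t x Ht). }
  intros t x u Ht Hx Hu Hur Hk T phi HT Hm.
  exact (lie_main W M w B psi Mb b rho HG HMb Hb0 Hrho HB Hpsi t x u Ht Hx Hu Hur Hk T phi HT Hm).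
Qed.
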